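(* Let $f:\{-1,1\}^n\to\mathbb R_{\ge0}$ with $\mathbb E[f]\le1$ be an $(\epsilon,\delta)$-approximate conical $d$-junta, where $\epsilon<1/n^4$, $d\ge\deg(f)$, and $\delta<1/n^{8d}$. Then $\deg_+\!\left(f+\frac1n\right)\le 8d$.
   Context: $\mathbb E$ is the uniform average over $\{-1,1\}^n$. For $I\subseteq[n]$, $x_I$ is the restriction of $x$ to $I$. A $d$-conjunction is $C(x)=2^{|I|}\mathbb 1[x_I=\alpha]$ with $|I|\le d$, $\alpha\in\{-1,1\}^I$. Fourier expansion: $h=\sum_S\hat h(S)\chi_S$ with $\chi_S(x)=\prod_{i\in S}x_i$. For $0<\epsilon<1$, $h$ is $\epsilon$-decaying if $\mathbb E[h]=0$ and $|\hat h(I)|\le\epsilon^{|I|}$ for all $I$. For $\epsilon\in(0,1)$, $\delta\in[0,1)$, a function $f\ge0$ with $\mathbb E[f]=1$ is an $(\epsilon,\delta)$-approximate conical $d$-junta if $f=\sum_{i\in[N]}\lambda_iC_i(1+h_i)+\gamma$ with $C_i$ $d$-conjunctions, $h_i$ $\epsilon$-decaying, $\lambda_i\ge0$, $\sum_i\lambda_i\le1$, and $\gamma\ge0$ with $\mathbb E[\gamma]\le\delta$. A $d$-junta depends on at most $d$ coordinates; a conical $d$-junta is a nonnegative combination of nonnegative $d$-juntas; $\deg_+(f)$ is the least positive integer $d$ with $f$ a conical $d$-junta; $\deg(f)$ is the degree of the multilinear polynomial representing $f$. *)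

(* Defs.v *)
From HB Require Import structures.
From mathcomp Require Import all_boot all_order all_algebra.
Set Implicit Arguments. Unset Strict Implicit. Unset Printing Implicit Defensive.
Import Order.TTheory GRing.Theory Num.Theory.
Local Open Scope ring_scope.

(* The hypercube {-1,1}^n: a point x : cube n encodes the vector whose
   i-th coordinate is (-1)^(x i), i.e. x i = true <-> x_i = -1. *)
Definition cube (n : nat) := {ffun 'I_n -> bool}.

Section Defs.
Variables (R : realFieldType) (n : nat).

Definition xval (x : cube n) (i : 'I_n) : R := if x i then -1 else 1.

Definition Ex (f : cube n -> R) : R := (\sum_(x : cube n) f x) / (2 ^+ n).

Definition chi (S : {set 'I_n}) (x : cube n) : R := \prod_(i in S) xval x i.

Definition fourier (h : cube n -> R) (S : {set 'I_n}) : R :=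
  Ex (fun x => h x * chi S x).

Definition mldeg (f : cube n -> R) : nat :=
  \max_(S : {set 'I_n} | fourier f S != 0) #|S|.

Definition conjunction (I : {set 'I_n}) (alpha : cube n) (x : cube n) : R :=
  2 ^+ #|I| * (if [forall i in I, x i == alpha i] then 1 else 0).

Definition is_dconj (d : nat) (C : cube n -> R) : Prop :=
  exists (I : {set 'I_n}) (alpha : cube n),
    (#|I| <= d)%N /\ C = conjunction I alpha.

Definition decaying (eps : R) (h : cube n -> R) : Prop :=
  Ex h = 0 /\ forall I : {set 'I_n}, `|fourier h I| <= eps ^+ #|I|.

(* the decomposition part of an (eps,delta)-approximate conical d-junta:
   f = sum_i lambda_i C_i (1 + h_i) + gamma *)
Definition approx_conical_junta (eps delta : R) (d : nat) (f : cube n -> R)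
  : Prop :=
  exists (N : nat) (lambda : 'I_N -> R) (C h : 'I_N -> cube n -> R)
         (gamma : cube n -> R),
    [/\ forall i, is_dconj d (C i),
        forall i, decaying eps (h i),
        forall i, 0 <= lambda i,
        \sum_(i < N) lambda i <= 1 &
        [/\ forall x, 0 <= gamma x,
        Ex gamma <= delta &
        forall x, f x = \sum_(i < N) lambda i * C i x * (1 + h i x) + gamma x]].

Definition junta (d : nat) (g : cube n -> R) : Prop :=
  exists J : {set 'I_n}, (#|J| <= d)%N /\
    forall x y : cube n, (forall i, i \in J -> x i = y i) -> g x = g y.

Definition conical_junta (d : nat) (f : cube n -> R) : Prop :=
  exists (N : nat) (c : 'I_N -> R) (g : 'I_N -> cube n -> R),
    [/\ forall i, 0 <= c i,
        forall i, junta d (g i),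
        forall i x, 0 <= g i x &
        forall x, f x = \sum_(i < N) c i * g i x].

(* deg_+(f) <= k, where deg_+(f) is the least positive integer d such that
   f is a conical d-junta: some positive d' <= k makes f a conical d'-junta *)
Definition degp_le (f : cube n -> R) (k : nat) : Prop :=
  exists d' : nat, (0 < d' <= k)%N /\ conical_junta d' f.

End Defs.

(* Main.v *)
Require Import Defs.
From HB Require Import structures.
From mathcomp Require Import all_boot all_order all_algebra.
From mathcomp Require Import ring lra zify.
Import Order.TTheory GRing.Theory Num.Theory.
Local Open Scope ring_scope.
Set Implicit Arguments. Unset Strict Implicit.

Section Fourier.
Variables (R : realFieldType) (n : nat).
Implicit Types (S T U V I : {set 'I_n}) (x y : cube n).

Definition symd S T : {set 'I_n} := (S :\: T) :|: (T :\: S).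

Lemma xval_sq x i : xval R x i * xval R x i = 1.
Proof. by rewrite /xval; case: (x i); rewrite ?mulrNN mulr1. Qed.

Lemma xval_norm x i : `|xval R x i| = 1.
Proof. by rewrite /xval; case: (x i); rewrite ?normrN normr1. Qed.

Lemma chiE S x : chi R S x = \prod_i (if i \in S then xval R x i else 1).
Proof. by rewrite /chi big_mkcond. Qed.

Lemma chi_norm S x : `|chi R S x| = 1.
Proof. by rewrite /chi normr_prod; apply: big1 => i _; rewrite xval_norm. Qed.

Lemma chi0 x : chi R set0 x = 1.
Proof. by rewrite /chi big_set0. Qed.

Lemma chi_mul S T x : chi R S x * chi R T x = chi R (symd S T) x.
Proof.
rewrite !chiE -big_split /=; apply: eq_bigr => i _.
rewrite /symd !inE; case: (i \in S); case: (i \in T) => /=;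
  by rewrite ?mulr1 ?mul1r ?xval_sq.
Qed.

Lemma symd0 S T : (symd S T == set0) = (S == T).
Proof.
apply/eqP/eqP => [H|->]; last by rewrite /symd setDv setU0.
apply/setP => i; have : i \in symd S T = (i \in set0) by rewrite H.
by rewrite /symd !inE; case: (i \in S); case: (i \in T).
Qed.

Lemma symdC S T : symd S T = symd T S.
Proof. by rewrite /symd setUC. Qed.

Lemma card_symd_le S T : (#|symd S T| <= #|S| + #|T|)%N.
Proof.
apply: leq_trans (leq_card_setU S T).
by apply: subset_leq_card; apply/subsetP => i; rewrite /symd !inE;
  case: (i \in S); case: (i \in T).
Qed.

Lemma card_symd_ge S T : (#|T| <= #|symd S T| + #|S|)%N.
Proof.
apply: leq_trans (leq_card_setU (symd S T) S).
by apply: subset_leq_card; apply/subsetP => i; rewrite /symd !inE;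
  case: (i \in S); case: (i \in T).
Qed.

Lemma prod_expand (a : 'I_n -> R) :
  \prod_i (1 + a i) = \sum_(S : {set 'I_n}) \prod_(i in S) a i.
Proof.
under eq_bigr => i _ do rewrite addrC.
rewrite bigA_distr /=.
by apply: eq_bigr => S _; rewrite [RHS]big_mkcond.
Qed.

Lemma Ex_ext (f g : cube n -> R) : (forall x, f x = g x) -> Ex f = Ex g.
Proof. by move=> H; rewrite /Ex; congr (_ / _); apply: eq_bigr. Qed.

Lemma ExD (f g : cube n -> R) : Ex (fun x => f x + g x) = Ex f + Ex g.
Proof. by rewrite /Ex big_split mulrDl. Qed.

Lemma ExB (f g : cube n -> R) : Ex (fun x => f x - g x) = Ex f - Ex g.
Proof. by rewrite /Ex sumrB mulrBl. Qed.

Lemma ExZ c (f : cube n -> R) : Ex (fun x => c * f x) = c * Ex f.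
Proof. by rewrite /Ex -mulr_sumr mulrA. Qed.

Lemma Ex_sum (I : Type) (r : seq I) (P : pred I) (F : I -> cube n -> R) :
  Ex (fun x => \sum_(i <- r | P i) F i x) = \sum_(i <- r | P i) Ex (F i).
Proof. by rewrite /Ex exchange_big mulr_suml. Qed.

Lemma two_pos : (0 : R) < 2 ^+ n.
Proof. by apply: exprn_gt0; rewrite ltr0n. Qed.

Lemma Ex_le (f g : cube n -> R) : (forall x, f x <= g x) -> Ex f <= Ex g.
Proof.
move=> H; rewrite /Ex; apply: ler_wpM2r; first by rewrite invr_ge0 ltW // two_pos.
by apply: ler_sum => x _; apply: H.
Qed.

Lemma Ex_abs (f : cube n -> R) : `|Ex f| <= Ex (fun x => `|f x|).
Proof.
rewrite /Ex normrM (ger0_norm (x := _^-1)); last by rewrite invr_ge0 ltW // two_pos.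
apply: ler_wpM2r; first by rewrite invr_ge0 ltW // two_pos.
exact: ler_norm_sum.
Qed.

Lemma sum_chi S : \sum_(x : cube n) chi R S x = if S == set0 then 2 ^+ n else 0.
Proof.
pose F (i : 'I_n) (b : bool) : R :=
  if i \in S then (if b then -1 else 1) else 1.
have E : \sum_(x : cube n) chi R S x = \prod_i \sum_(b : bool) F i b.
  rewrite bigA_distr_bigA /=; apply: eq_bigr => x _; rewrite chiE.
  by apply: eq_bigr => i _; rewrite /F /xval.
rewrite E; under eq_bigr => i _ do rewrite big_bool /F.
case: eqP => [->|/eqP /set0Pn [j Hj]].
  by rewrite (eq_bigr (fun _ => 2)) ?prodr_const ?card_ord // => i _; rewrite inE.
rewrite (bigD1 j) //= Hj; by rewrite addNr mul0r.
Qed.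

Lemma Ex_chi S : Ex (chi R S) = (S == set0)%:R.
Proof.
rewrite /Ex sum_chi; case: eqP => _; last by rewrite mul0r.
by rewrite mulfV // gt_eqF // two_pos.
Qed.

Lemma fourier_ext (f g : cube n -> R) S : (forall x, f x = g x) ->
  fourier f S = fourier g S.
Proof. by move=> H; apply: Ex_ext => x; rewrite H. Qed.

Lemma fourierD (f g : cube n -> R) S :
  fourier (fun x => f x + g x) S = fourier f S + fourier g S.
Proof. by rewrite /fourier -ExD; apply: Ex_ext => x; rewrite mulrDl. Qed.

Lemma fourierB (f g : cube n -> R) S :
  fourier (fun x => f x - g x) S = fourier f S - fourier g S.
Proof. by rewrite /fourier -ExB; apply: Ex_ext => x; rewrite mulrBl. Qed.

Lemma fourierZ c (f : cube n -> R) S :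
  fourier (fun x => c * f x) S = c * fourier f S.
Proof. by rewrite /fourier -ExZ; apply: Ex_ext => x; rewrite mulrA. Qed.

Lemma fourier_sum (I : Type) (r : seq I) (P : pred I) (F : I -> cube n -> R) S :
  fourier (fun x => \sum_(i <- r | P i) F i x) S = \sum_(i <- r | P i) fourier (F i) S.
Proof. by rewrite /fourier -Ex_sum; apply: Ex_ext => x; rewrite mulr_suml. Qed.

Lemma fourier_chi U S : fourier (chi R U) S = (U == S)%:R.
Proof.
rewrite /fourier (Ex_ext (g := chi R (symd U S))); last by move=> x; rewrite chi_mul.
by rewrite Ex_chi symd0.
Qed.

Lemma fourier1 S : fourier (fun _ => 1 : R) S = (S == set0)%:R.
Proof.
rewrite (fourier_ext (f := fun _ => 1 : R) (g := chi R set0)) ?fourier_chi; last by move=> x; rewrite chi0.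
by rewrite eq_sym.
Qed.

Lemma fourier_mulchi (f : cube n -> R) V S :
  fourier (fun x => f x * chi R V x) S = fourier f (symd V S).
Proof. by rewrite /fourier; apply: Ex_ext => x; rewrite -mulrA chi_mul. Qed.

Lemma fourier_abs (f : cube n -> R) S : `|fourier f S| <= Ex (fun x => `|f x|).
Proof.
apply: le_trans (Ex_abs _) _; apply: Ex_le => x.
by rewrite normrM chi_norm mulr1.
Qed.

Lemma fourier_lin (P : pred {set 'I_n}) (c : {set 'I_n} -> R) W :
  fourier (fun x => \sum_(U | P U) c U * chi R U x) W = if P W then c W else 0.
Proof.
rewrite fourier_sum; under eq_bigr => U _ do rewrite fourierZ fourier_chi.
rewrite big_mkcond (bigD1 W) //= eqxx mulr1 big1 ?addr0 //.
by move=> U /negbTE HU; rewrite HU mulr0; case: (P U).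
Qed.

Lemma prod_xval x y :
  \prod_i (1 + xval R y i * xval R x i) = if y == x then 2 ^+ n else 0.
Proof.
case: eqP => [->|Hne].
  by rewrite (eq_bigr (fun _ => 2)) ?prodr_const ?card_ord // => i _; rewrite xval_sq.
case: (pickP (fun i => y i != x i)) => [i Hi|H].
  rewrite (bigD1 i) //= /xval; move: Hi; case: (y i); case: (x i) => //= _;
  by rewrite ?mulrN ?mulNr ?mulr1 ?addrN mul0r.
exfalso; apply: Hne; apply/ffunP => i; have := H i; by move=> /= /negbFE /eqP.
Qed.

Lemma inversion (h : cube n -> R) x : h x = \sum_S fourier h S * chi R S x.
Proof.
have E : \sum_S fourier h S * chi R S x =
   (\sum_(y : cube n) h y * \sum_S (chi R S y * chi R S x)) / 2 ^+ n.
  transitivity (\sum_S \sum_(y : cube n) h y * (chi R S y * chi R S x) / 2 ^+ n).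
    apply: eq_bigr => S _; rewrite /fourier /Ex !mulr_suml.
    by apply: eq_bigr => y _; ring.
  rewrite exchange_big /= mulr_suml; apply: eq_bigr => y _.
  by rewrite mulr_sumr mulr_suml.
rewrite E.
have E2 y : \sum_S chi R S y * chi R S x = if y == x then 2 ^+ n else 0.
  rewrite -prod_xval prod_expand; apply: eq_bigr => S _.
  by rewrite /chi -big_split.
under eq_bigr => y _ do rewrite E2.
rewrite (bigD1 x) //= eqxx big1 ?addr0; last by move=> y /negbTE ->; rewrite mulr0.
by rewrite mulfK // gt_eqF // two_pos.
Qed.

End Fourier.


Section Conj.
Variables (R : realFieldType) (n : nat).
Implicit Types (S T U V I J : {set 'I_n}) (x y : cube n) (g : cube n -> R).

Definition kap I (al : cube n) V : R :=
  \prod_(j in V) (if j \in I then xval R al j else 0).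

Lemma conjE I al x : conjunction R I al x = \sum_V kap I al V * chi R V x.
Proof.
have E : conjunction R I al x =
    \prod_i (1 + (if i \in I then xval R al i * xval R x i else 0)).
  rewrite /conjunction; case: (boolP [forall i in I, x i == al i]) => H.
    rewrite mulr1 -prodr_const big_mkcond; apply: eq_bigr => i _.
    case: ifP => Hi; last by rewrite addr0.
    move/forall_inP: H => /(_ i Hi) /eqP E.
    have -> : xval R x i = xval R al i by rewrite /xval E.
    by rewrite xval_sq.
  rewrite mulr0; move/forall_inPn: H => [i Hi Hne].
  rewrite (bigD1 i) //= Hi /xval; move: Hne; case: (x i); case: (al i) => //= _;
  by rewrite ?mulrN ?mulNr ?mulr1 ?addrN mul0r.
rewrite E prod_expand; apply: eq_bigr => V _.
rewrite /kap /chi -big_split /=; apply: eq_bigr => i _.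
by case: (i \in I); rewrite ?mul0r.
Qed.

Lemma fourier_conj I al (phi : cube n -> R) S :
  fourier (fun x => conjunction R I al x * phi x) S =
  \sum_V kap I al V * fourier phi (symd V S).
Proof.
rewrite (fourier_ext (g := fun x => \sum_(V : {set 'I_n}) kap I al V * (phi x * chi R V x))).
  by rewrite fourier_sum; apply: eq_bigr => V _; rewrite fourierZ fourier_mulchi.
move=> x; rewrite conjE mulr_suml; apply: eq_bigr => V _.
by rewrite mulrAC mulrA.
Qed.

Lemma kap_sub I al V : kap I al V != 0 -> V \subset I.
Proof.
apply: contraR => /subsetPn [j Hj HnI].
by rewrite /kap (bigD1 j) //= (negbTE HnI) mul0r.
Qed.

Lemma kap_norm_sum I al : \sum_V `|kap I al V| = 2 ^+ #|I|.
Proof.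
transitivity (\sum_(V : {set 'I_n}) \prod_(j in V) (if j \in I then 1 else 0 : R)).
  apply: eq_bigr => V _; rewrite /kap normr_prod; apply: eq_bigr => j _.
  by case: (j \in I); rewrite ?xval_norm ?normr0.
rewrite -prod_expand -prodr_const [RHS]big_mkcond; apply: eq_bigr => i _.
by case: (i \in I); rewrite ?addr0.
Qed.

Definition dep (J : {set 'I_n}) (g : cube n -> R) :=
  forall x y, (forall i, i \in J -> x i = y i) -> g x = g y.

Lemma dep_conj I al : dep I (conjunction R I al).
Proof.
move=> x y H; rewrite /conjunction.
have -> : [forall i in I, x i == al i] = [forall i in I, y i == al i].
  by apply: eq_forallb_in => i Hi; rewrite H.
by [].
Qed.

Lemma dep_chi U : dep U (chi R U).
Proof. by move=> x y H; rewrite /chi; apply: eq_bigr => i Hi; rewrite /xval H. Qed.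

Lemma dep_const J c : dep J (fun _ => c).
Proof. by []. Qed.

Lemma dep_sub J1 J2 g : J1 \subset J2 -> dep J1 g -> dep J2 g.
Proof. by move=> /subsetP s H x y E; apply: H => i /s; apply: E. Qed.

Lemma dep_mul J1 J2 g1 g2 : dep J1 g1 -> dep J2 g2 ->
  dep (J1 :|: J2) (fun x => g1 x * g2 x).
Proof.
move=> H1 H2 x y E; congr (_ * _).
  by apply: H1 => i Hi; apply: E; rewrite inE Hi.
by apply: H2 => i Hi; apply: E; rewrite inE Hi orbT.
Qed.

Lemma dep_add J g1 g2 : dep J g1 -> dep J g2 -> dep J (fun x => g1 x + g2 x).
Proof. by move=> H1 H2 x y E; rewrite (H1 x y E) (H2 x y E). Qed.

Lemma cone_ext k (f g : cube n -> R) :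
  (forall x, f x = g x) -> conical_junta k f -> conical_junta k g.
Proof.
move=> E [N [c [h [H1 H2 H3 H4]]]]; exists N, c, h; split => // x.
by rewrite -E H4.
Qed.

Lemma cone0 k : conical_junta k (fun _ : cube n => 0 : R).
Proof.
exists 0%N, (fun _ => 0), (fun _ _ => 0 : R); split; try by case.
by move=> x; rewrite big_ord0.
Qed.

Lemma coneD k (f g : cube n -> R) :
  conical_junta k f -> conical_junta k g -> conical_junta k (fun x => f x + g x).
Proof.
move=> [N1 [c1 [g1 [H1 H2 H3 H4]]]] [N2 [c2 [g2 [K1 K2 K3 K4]]]].
exists (N1 + N2)%N,
  (fun i => match split i with inl j => c1 j | inr j => c2 j end),
  (fun i => match split i with inl j => g1 j | inr j => g2 j end).
split.
- by move=> i; case: (split i).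
- by move=> i; case: (split i).
- by move=> i x; case: (split i).
move=> x; rewrite H4 K4 big_split_ord /=; congr (_ + _); apply: eq_bigr => j _.
  by have -> : split (lshift N2 j) = inl j := unsplitK (inl _ j).
by have -> : split (rshift N1 j) = inr j := unsplitK (inr _ j).
Qed.

Lemma coneZ k a (f : cube n -> R) :
  0 <= a -> conical_junta k f -> conical_junta k (fun x => a * f x).
Proof.
move=> Ha [N [c [h [H1 H2 H3 H4]]]]; exists N, (fun i => a * c i), h; split => //.
  by move=> i; rewrite mulr_ge0.
by move=> x; rewrite H4 mulr_sumr; apply: eq_bigr => i _; rewrite mulrA.
Qed.

Lemma cone_sum k (I : Type) (r : seq I) (P : pred I) (F : I -> cube n -> R) :
  (forall i, P i -> conical_junta k (F i)) ->
  conical_junta k (fun x => \sum_(i <- r | P i) F i x).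
Proof.
move=> H; elim: r => [|i r IH].
  by apply: cone_ext (cone0 k) => x; rewrite big_nil.
case Pi: (P i).
  apply: cone_ext (coneD (H i Pi) IH) => x.
  by rewrite big_cons Pi.
by apply: cone_ext IH => x; rewrite big_cons Pi.
Qed.

Lemma cone_atom k J (g : cube n -> R) :
  (#|J| <= k)%N -> dep J g -> (forall x, 0 <= g x) -> conical_junta k g.
Proof.
move=> HJ Hd Hg; exists 1%N, (fun _ => 1), (fun _ => g); split => //.
- by move=> i; exists J.
- by move=> x; rewrite big_ord1 mul1r.
Qed.

End Conj.


Section Junta.
Variables (R : realFieldType) (n : nat).
Implicit Types (S T U V I J : {set 'I_n}) (x y : cube n) (g h C : cube n -> R).

Definition lowh (d : nat) (h : cube n -> R) x : R :=
  \sum_(U : {set 'I_n} | (#|U| <= 7 * d)%N) fourier h U * chi R U x.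

Definition Ah (d : nat) (C h : cube n -> R) x : R := C x * (1 + lowh d h x).

Lemma fourier_h0 (eps : R) h : decaying eps h -> fourier h set0 = 0.
Proof.
move=> [H0 _]; rewrite -H0 /fourier; apply: Ex_ext => x.
by rewrite chi0 mulr1.
Qed.

Lemma sum_eps_card (e : R) : \sum_(U : {set 'I_n}) e ^+ #|U| = (1 + e) ^+ n.
Proof.
have <- : \prod_(i < n) (1 + e) = (1 + e) ^+ n by rewrite prodr_const card_ord.
by rewrite prod_expand; apply: eq_bigr => U _; rewrite prodr_const.
Qed.



Variable (d : nat) (eps : R).
Hypothesis eps_ge0 : 0 <= eps.
Hypothesis eps_le1 : eps <= 1.

Lemma sum_fourier_abs h : decaying eps h ->
  \sum_(U : {set 'I_n} | (#|U| <= 7 * d)%N) `|fourier h U| <= (1 + eps) ^+ n - 1.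
Proof.
move=> Hh; have H0 := fourier_h0 Hh.
apply: le_trans (_ : \sum_(U : {set 'I_n}) `|fourier h U| <= _).
  rewrite [leLHS]big_mkcond /=; apply: ler_sum => U _.
  by case: ifP.
rewrite -sum_eps_card (bigD1 set0) //= H0 normr0 add0r.
rewrite [X in _ <= X - _](bigD1 set0) //= cards0 expr0 addrC addrK.
by apply: ler_sum => U _; case: Hh => _; apply.
Qed.

Lemma conj_ge0 I al x : 0 <= conjunction R I al x.
Proof.
by rewrite /conjunction mulr_ge0 ?exprn_ge0 ?ler0n //; case: ifP.
Qed.

Lemma Ah_cone C h : is_dconj d C -> decaying eps h -> (1 + eps) ^+ n <= 2 ->
  conical_junta (8 * d) (Ah d C h).
Proof.
move=> [I [al [HI ->]]] Hh H2.
set a := 1 - \sum_(U : {set 'I_n} | (#|U| <= 7 * d)%N) `|fourier h U|.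
have Ha : 0 <= a.
  have := sum_fourier_abs Hh; rewrite /a; lra.
pose F (U : {set 'I_n}) x :=
  conjunction R I al x * (`|fourier h U| + fourier h U * chi R U x).
have C1 : conical_junta (8 * d) (fun x => conjunction R I al x * a).
  apply: (cone_atom (J := I :|: set0)).
  + by rewrite setU0; apply: leq_trans HI _; lia.
  + move=> x y E; congr (_ * _); apply: dep_conj => i Hi.
    by apply: E; rewrite inE Hi.
  + by move=> x; rewrite mulr_ge0 ?conj_ge0.
have C2 : conical_junta (8 * d) (fun x =>
    \sum_(U : {set 'I_n} | (#|U| <= 7 * d)%N) F U x).
  apply: cone_sum => U HU; apply: (cone_atom (J := I :|: U)).
  + apply: leq_trans (leq_card_setU _ _) _; lia.
  + move=> x y E; rewrite /F; congr (_ * (_ + _ * _)).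
      by apply: dep_conj => i Hi; apply: E; rewrite inE Hi.
    by apply: dep_chi => i Hi; apply: E; rewrite inE Hi orbT.
  + move=> x; rewrite mulr_ge0 ?conj_ge0 //.
    have := lerNnormlW (lexx `|fourier h U * chi R U x|).
    rewrite normrM chi_norm mulr1; lra.
apply: cone_ext (coneD C1 C2) => x.
rewrite /Ah /lowh /F -mulr_sumr -mulrDr; congr (_ * _).
by rewrite big_split /= /a addrA subrK.
Qed.

Lemma rem_low C h S : is_dconj d C -> (#|S| <= 6 * d)%N ->
  fourier (fun x => C x * (h x - lowh d h x)) S = 0.
Proof.
move=> [I [al [HI ->]]] HS; rewrite fourier_conj; apply: big1 => V _.
case: (eqVneq (kap R I al V) 0) => [->|/kap_sub HV]; first by rewrite mul0r.
rewrite fourierB /lowh fourier_lin.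
have -> : (#|symd V S| <= 7 * d)%N.
  apply: leq_trans (card_symd_le _ _) _.
  have := subset_leq_card HV; lia.
by rewrite subrr mulr0.
Qed.

Lemma Ah_fourier I al h S :
  fourier (Ah d (conjunction R I al) h) S =
  \sum_V kap R I al V * ((symd V S == set0)%:R +
     (if (#|symd V S| <= 7 * d)%N then fourier h (symd V S) else 0)).
Proof.
rewrite /Ah fourier_conj; apply: eq_bigr => V _.
by rewrite fourierD fourier1 /lowh fourier_lin.
Qed.

Lemma Ah_high C h S : is_dconj d C -> (8 * d < #|S|)%N ->
  fourier (Ah d C h) S = 0.
Proof.
move=> [I [al [HI ->]]] HS; rewrite Ah_fourier; apply: big1 => V _.
case: (eqVneq (kap R I al V) 0) => [->|/kap_sub HV]; first by rewrite mul0r.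
have HV' := subset_leq_card HV.
have Hc := card_symd_ge V S.
have -> : (#|symd V S| <= 7 * d)%N = false by apply/negbTE; lia.
have -> : (symd V S == set0) = false.
  by apply/negbTE/eqP => E; move: Hc; rewrite E cards0; lia.
by rewrite addr0 mulr0.
Qed.

Lemma Ah_mid C h S : is_dconj d C -> decaying eps h -> (6 * d < #|S|)%N ->
  `|fourier (Ah d C h) S| <= 2 ^+ d * eps ^+ (5 * d).
Proof.
move=> [I [al [HI ->]]] Hh HS; rewrite Ah_fourier.
apply: le_trans (ler_norm_sum _ _ _) _.
apply: le_trans (_ : \sum_V `|kap R I al V| * eps ^+ (5 * d) <= _).
  apply: ler_sum => V _; rewrite normrM.
  case: (eqVneq (kap R I al V) 0) => [->|/kap_sub HV]; first by rewrite normr0 !mul0r.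
  apply: ler_wpM2l; first exact: normr_ge0.
  have HV' := subset_leq_card HV.
  have Hc := card_symd_ge V S.
  have -> : (symd V S == set0) = false.
    by apply/negbTE/eqP => E; move: Hc; rewrite E cards0; lia.
  rewrite add0r; case: ifP => _; last by rewrite normr0 exprn_ge0.
  case: Hh => _ /(_ (symd V S)) Hb; apply: le_trans Hb _.
  by apply: ler_wiXn2l => //; lia.
rewrite -mulr_suml kap_norm_sum; apply: ler_wpM2r; first exact: exprn_ge0.
by apply: ler_weXn2l; [lra | exact: HI].
Qed.

End Junta.


Lemma count_le (n k : nat) :
  (#|[set S : {set 'I_n} | (#|S| <= k)%N]| <= n.+1 ^ k)%N.
Proof.
elim: k => [|k IH].
  rewrite expn0; apply: leq_trans (_ : #|[set (set0 : {set 'I_n})]| <= 1)%N; last by rewrite cards1.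
  apply: subset_leq_card; apply/subsetP => S; rewrite !inE leqn0 cards_eq0.
  by [].
pose Ak := [set S : {set 'I_n} | (#|S| <= k)%N].
pose F (p : option 'I_n * {set 'I_n}) :=
  match p.1 with None => p.2 | Some i => i |: p.2 end.
apply: leq_trans (_ : #|[set F p | p in setX [set: option 'I_n] Ak]| <= _)%N.
  apply: subset_leq_card; apply/subsetP => S; rewrite inE => HS.
  apply/imsetP.
  case: (leqP #|S| k) => Hk.
    by exists (None, S); rewrite // !inE Hk.
  have : (0 < #|S|)%N by lia.
  rewrite card_gt0 => /set0Pn [i Hi].
  exists (Some i, S :\ i); last by rewrite /F /= setD1K.
  rewrite !inE /=.
  by move: HS; rewrite (cardsD1 i S) Hi add1n ltnS.
apply: leq_trans (leq_imset_card _ _) _.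
rewrite cardsX cardsT card_option card_ord expnS.
by rewrite leq_mul2l IH orbT.
Qed.

Lemma bern_nat (n m : nat) : ((n.+1) ^ m * (n - m) <= n ^ m.+1)%N.
Proof.
elim: m => [|m IH]; first by rewrite expn0 expn1 subn0 mul1n.
set P := (n.+1 ^ m)%N.
have key : (n.+1 * (n - m.+1) <= n * (n - m))%N by nia.
have := leq_mul (leqnn P) key.
rewrite expnS [(n ^ m.+2)%N]expnS.
move: IH; set Q := (n ^ m.+1)%N => IH H.
have := leq_mul (leqnn n) IH.
nia.
Qed.

Section Num.
Variable R : realFieldType.

Lemma bern (x : R) (m : nat) : 0 <= x -> (1 + x) ^+ m * (1 - m%:R * x) <= 1.
Proof.
move=> Hx; elim: m => [|m IH]; first by rewrite expr0 mul0r subr0 mul1r.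
have Hp : 0 <= (1 + x) ^+ m by rewrite exprn_ge0 // addr_ge0.
rewrite exprS -addn1 natrD.
set p := (1 + x) ^+ m in Hp IH *.
have H1 : 0 <= p * ((m%:R + 1) * x * x).
  by rewrite mulr_ge0 // mulr_ge0 // mulr_ge0 // addr_ge0.
have Hm : 0 <= (m%:R : R) by rewrite ler0n.
nra.
Qed.

End Num.


Lemma onepeps_le2 (R : realFieldType) (n : nat) (eps : R) :
  (2 <= n)%N -> 0 <= eps -> eps < 1 / (n%:R ^+ 4) -> (1 + eps) ^+ n <= 2.
Proof.
move=> Hn He Hlt.
have Hnpos : (0 : R) < n%:R by rewrite ltr0n; lia.
have H4 : eps * n%:R ^+ 4 < 1.
  by rewrite -ltr_pdivlMr ?exprn_gt0.
have Hb := bern n He.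
have Hn3 : (8 : R) <= n%:R ^+ 3.
  have -> : (8 : R) = 2%:R ^+ 3 by rewrite -natrX.
  by rewrite -!natrX ler_nat leq_exp2r.
have Ha : 0 <= n%:R * eps by rewrite mulr_ge0 // ler0n.
have Hab : n%:R * eps * n%:R ^+ 3 < 1.
  by move: H4; rewrite [n%:R ^+ 4]exprS mulrA (mulrC eps).
have Hsmall : n%:R * eps <= 1 / 2.
  set a := n%:R * eps in Ha Hab *; set b := n%:R ^+ 3 in Hn3 Hab *.
  nra.
have Hp : 0 <= (1 + eps) ^+ n by rewrite exprn_ge0 // addr_ge0.
set p := (1 + eps) ^+ n in Hb Hp *.
set a := n%:R * eps in Ha Hsmall Hb *.
nra.
Qed.

Lemma final_nat (n d N6 N8 : nat) : (0 < d)%N -> (8 * d < n)%N ->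
  (N6 <= n.+1 ^ (6 * d))%N -> (N8 <= n.+1 ^ (8 * d))%N ->
  ((N6 * (n ^ d) ^ 12 + N8 * 2 ^ d) * n <= (n ^ d) ^ 20)%N.
Proof.
move=> Hd Hn H6 H8.
have Ea k : (n ^ (k * d) = (n ^ d) ^ k)%N by rewrite mulnC expnM.
have Eb k : (2 ^ (k * d) = (2 ^ d) ^ k)%N by rewrite mulnC expnM.
set a := (n ^ d)%N in Ea *; set b := (2 ^ d)%N in Eb *.
have Hna : (n <= a)%N.
  by rewrite /a -{1}(expn1 n) leq_pexp2l //; lia.
have Hba : (b <= a)%N by rewrite /b /a leq_exp2r //; lia.
have B6 : (n.+1 ^ (6 * d) <= 4 * a ^ 6)%N.
  have := bern_nat n (6 * d); rewrite expnSr Ea.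
  set P := (n.+1 ^ (6 * d))%N; set Q := (a ^ 6)%N => HB.
  have : (P * n <= 4 * Q * n)%N.
    apply: leq_trans (_ : P * (4 * (n - 6 * d)) <= _)%N.
      by apply: leq_mul => //; lia.
    by rewrite mulnCA -mulnA leq_mul2l HB orbT.
  by rewrite leq_mul2r; case/orP => //; lia.
have B8 : (n.+1 ^ (8 * d) <= b ^ 8 * a ^ 8)%N.
  by rewrite -Ea -Eb -expnMn leq_exp2r; lia.
have Hb9 : (b ^ 8 * b <= a ^ 9)%N.
  by rewrite -expnSr leq_exp2r.
have Ha1 : (1 <= a)%N by lia.
have S1 : (N6 * a ^ 12 <= 4 * a ^ 18)%N.
  have -> : (4 * a ^ 18 = 4 * a ^ 6 * a ^ 12)%N by rewrite -mulnA -expnD.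
  by rewrite leq_mul2r; apply/orP; right; lia.
have S2 : (N8 * b <= a ^ 18)%N.
  apply: leq_trans (_ : b ^ 8 * a ^ 8 * b <= _)%N.
    by rewrite leq_mul2r; apply/orP; right; lia.
  rewrite mulnAC; apply: leq_trans (_ : a ^ 9 * a ^ 8 <= _)%N.
    by rewrite leq_mul2r Hb9 orbT.
  by rewrite -expnD leq_pexp2l.
have S3 : (5 * n <= a * a)%N by nia.
have -> : (a ^ 20 = a ^ 18 * (a * a))%N by rewrite mulnn -expnD.
set A := (a ^ 18)%N in S1 S2 *.
nia.
Qed.

Lemma final_real (R : realFieldType) (n d N6 N8 : nat) (eps delta : R) :
  (0 < d)%N -> (8 * d < n)%N -> 0 <= eps -> 0 <= delta ->
  eps < 1 / (n%:R ^+ 4) -> delta < 1 / (n%:R ^+ (8 * d)) ->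
  (N6 <= n.+1 ^ (6 * d))%N -> (N8 <= n.+1 ^ (8 * d))%N ->
  N6%:R * delta + N8%:R * (2 ^+ d * eps ^+ (5 * d)) <= 1 / n%:R.
Proof.
move=> Hd Hn He Hdl Heps Hdel H6 H8.
have HN := final_nat Hd Hn H6 H8.
set X : R := n%:R.
have HX : 0 < X by rewrite ltr0n; lia.
set a : R := X ^+ d.
have Ha : 0 < a by rewrite exprn_gt0.
have Hdel' : delta * a ^+ 8 <= 1.
  apply: ltW; rewrite -ltr_pdivlMr ?exprn_gt0 //.
  by rewrite /a -exprM mulnC.
have Heps' : eps ^+ (5 * d) * a ^+ 20 <= 1.
  have H1 : eps * X ^+ 4 <= 1.
    by apply: ltW; rewrite -ltr_pdivlMr ?exprn_gt0.
  have : (eps * X ^+ 4) ^+ (5 * d) <= 1.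
    by rewrite exprn_ile1 // mulr_ge0 // exprn_ge0 // ltW.
  rewrite exprMn -exprM /a -exprM.
  by have -> : (4 * (5 * d) = d * 20)%N by lia.
have HNr : (N6%:R * a ^+ 12 + N8%:R * 2 ^+ d) * X <= a ^+ 20.
  move: HN; rewrite -(ler_nat R) !natrM natrD !natrM !natrX.
  by rewrite -/X -/a.
set L := N6%:R * delta + N8%:R * (2 ^+ d * eps ^+ (5 * d)).
have h1 : L * a ^+ 20 <= N6%:R * a ^+ 12 + N8%:R * 2 ^+ d.
  have -> : L * a ^+ 20 = N6%:R * (delta * a ^+ 8) * a ^+ 12 +
      N8%:R * 2 ^+ d * (eps ^+ (5 * d) * a ^+ 20) by rewrite /L; ring.
  have HN6 : (0 : R) <= N6%:R by rewrite ler0n.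
  have HN8 : (0 : R) <= N8%:R * 2 ^+ d by rewrite mulr_ge0 ?ler0n ?exprn_ge0.
  apply: lerD.
    apply: ler_wpM2r; first by rewrite exprn_ge0 // ltW.
    by rewrite -[leRHS]mulr1; apply: ler_wpM2l.
  by rewrite -[leRHS]mulr1; apply: ler_wpM2l.
have h2 : L * X * a ^+ 20 <= 1 * a ^+ 20.
  rewrite mul1r mulrAC; apply: le_trans HNr.
  by apply: ler_wpM2r => //; apply: ltW.
rewrite ler_pM2r ?exprn_gt0 // in h2.
by rewrite ler_pdivlMr.
Qed.


Lemma lt_help (k d s : nat) : (0 < k)%N -> (k * d < s)%N -> (d < s)%N.
Proof. move=> Hk Hs; apply: leq_ltn_trans Hs; by rewrite leq_pmull. Qed.

Unset Implicit Arguments.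

Theorem lemma2p4 (R : realFieldType) (n d : nat) (eps delta : R)
    (f : cube n -> R) :
  0 < eps < 1 -> 0 <= delta < 1 ->
  (0 < d)%N ->
  (forall x, 0 <= f x) ->
  Ex f <= 1 ->
  approx_conical_junta eps delta d f ->
  eps < 1 / (n%:R ^+ 4) ->
  (mldeg f <= d)%N ->
  delta < 1 / (n%:R ^+ (8 * d)) ->
  degp_le (fun x => f x + 1 / n%:R) (8 * d).
Proof.
move=> /andP[He0 He1] /andP[Hd0 Hd1] Hd Hf0 HEf Hapx Heps Hdeg Hdel.
have Hd8 : (0 < 8 * d <= 8 * d)%N by rewrite leqnn andbT; lia.
case: (leqP n (8 * d)) => Hn.
  exists (8 * d)%N; split => //.
  apply: (cone_atom (J := setT)).
  - by rewrite cardsT card_ord.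
  - move=> x y E; have -> // : x = y.
    by apply/ffunP => i; apply: E; rewrite inE.
  - by move=> x; rewrite addr_ge0 // divr_ge0 // ler0n.
case: Hapx => N [lam [C [h [gam [HC Hh Hlam Hsum [Hgam HEg Hf]]]]]].
have He : 0 <= eps := ltW He0.
have He1' : eps <= 1 := ltW He1.
pose Af x := \sum_(i < N) lam i * Ah d (C i) (h i) x.
pose g x := f x - Af x.
have H2 : (1 + eps) ^+ n <= 2 by apply: onepeps_le2 => //; lia.
have Hfh (S : {set 'I_n}) : (d < #|S|)%N -> fourier f S = 0.
  move=> HS; apply/eqP; apply: contraTT HS => HS; rewrite -leqNgt.
  apply: leq_trans Hdeg.
  exact: (leq_bigmax_cond (F := fun S : {set 'I_n} => #|S|) _ HS).
have HgF (S : {set 'I_n}) : fourier g S =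
    fourier f S - \sum_(i < N) lam i * fourier (Ah d (C i) (h i)) S.
  rewrite /g fourierB /Af fourier_sum; congr (_ - _).
  by apply: eq_bigr => i _; rewrite fourierZ.
set K : R := 2 ^+ d * eps ^+ (5 * d).
have HK : 0 <= K by rewrite mulr_ge0 // exprn_ge0.
have Hc1 (S : {set 'I_n}) : (8 * d < #|S|)%N -> fourier g S = 0.
  move=> HS; have HS' : (d < #|S|)%N by apply: lt_help HS.
  rewrite HgF (Hfh S HS').
  rewrite big1 ?subr0 // => i _.
  by rewrite (Ah_high He He1' (h i) (HC i) HS) mulr0.
have Hc3 (S : {set 'I_n}) : (6 * d < #|S|)%N -> `|fourier g S| <= K.
  move=> HS; have HS' : (d < #|S|)%N by apply: lt_help HS.
  rewrite HgF (Hfh S HS').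
  rewrite sub0r normrN; apply: le_trans (ler_norm_sum _ _ _) _.
  apply: le_trans (_ : \sum_(i < N) lam i * K <= _).
    apply: ler_sum => i _; rewrite normrM ger0_norm //.
    by apply: ler_wpM2l => //; apply: Ah_mid.
  by rewrite -mulr_suml -[leRHS]mul1r; apply: ler_wpM2r.
have Hc2 (S : {set 'I_n}) : (#|S| <= 6 * d)%N -> `|fourier g S| <= delta.
  move=> HS.
  have E : fourier g S = \sum_(i < N) lam i *
      fourier (fun x => C i x * (h i x - lowh d (h i) x)) S + fourier gam S.
    rewrite (fourier_ext (g := fun x => \sum_(i < N) lam i *
        (C i x * (h i x - lowh d (h i) x)) + gam x)).
      rewrite fourierD fourier_sum; congr (_ + _).
      by apply: eq_bigr => i _; rewrite fourierZ.
    move=> x; rewrite /g /Af Hf /Ah addrAC -sumrB; congr (_ + _).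
    apply: eq_bigr => i _; rewrite -mulrA -mulrBr -mulrBr.
    by rewrite opprD addrACA subrr add0r.
  rewrite E big1 ?add0r; last first.
    by move=> i _; rewrite (rem_low He He1' (h i) (HC i) HS) mulr0.
  apply: le_trans (fourier_abs _ _) _; apply: le_trans HEg.
  by apply: Ex_le => x; rewrite ger0_norm.
have Hcost : \sum_(S : {set 'I_n} | (#|S| <= 8 * d)%N) `|fourier g S| <= 1 / n%:R.
  apply: le_trans (final_real Hd Hn He Hd0 Heps Hdel (count_le n (6 * d))
      (count_le n (8 * d))).
  apply: le_trans (_ : \sum_(S : {set 'I_n} | (#|S| <= 8 * d)%N)
      ((if (#|S| <= 6 * d)%N then delta else 0) + K) <= _).
    apply: ler_sum => S HS; case: (leqP #|S| (6 * d)) => H.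
      by apply: le_trans (Hc2 S H) _; rewrite lerDl.
    by rewrite add0r; apply: Hc3.
  rewrite big_split /=; apply: lerD.
    rewrite -big_mkcondr /=.
    rewrite (eq_bigl (fun S => S \in [set S : {set 'I_n} | (#|S| <= 6 * d)%N])).
      by rewrite sumr_const mulr_natl.
    move=> S; rewrite inE; apply/idP/idP => [/andP[]//|H'].
    by rewrite H' andbT; apply: leq_trans H' _; rewrite leq_mul2r orbT.
  rewrite (eq_bigl (fun S => S \in [set S : {set 'I_n} | (#|S| <= 8 * d)%N])).
    by rewrite sumr_const mulr_natl.
  by move=> S; rewrite inE.
exists (8 * d)%N; split => //.
pose gs (S : {set 'I_n}) := fourier g S.
have Cone1 : conical_junta (8 * d) Af.
  rewrite /Af; apply: (@cone_sum R n (8 * d) 'I_N (index_enum 'I_N) xpredT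
    (fun i x => lam i * Ah d (C i) (h i) x)).
  move=> i _; apply: coneZ => //.
  have := Ah_cone He He1' (HC i) (Hh i). apply. exact: H2.
have Cone2 : conical_junta (8 * d) (fun x =>
    \sum_(S : {set 'I_n} | (#|S| <= 8 * d)%N) (`|gs S| + gs S * chi R S x)).
  apply: cone_sum => S HS; apply: (cone_atom (J := S)) => //.
    by move=> x y E; rewrite (@dep_chi R n S x y E).
  move=> x; have := lerNnormlW (lexx `|gs S * chi R S x|).
  rewrite normrM chi_norm mulr1 => H.
  by rewrite addrC -[`|gs S|]opprK subr_ge0.
have Cone3 : conical_junta (8 * d)
    (fun _ : cube n => 1 / n%:R - \sum_(S : {set 'I_n} | (#|S| <= 8 * d)%N) `|gs S|).
  apply: (cone_atom (J := set0)); rewrite ?cards0 //.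
  by move=> x; rewrite subr_ge0.
apply: cone_ext (coneD (coneD Cone1 Cone2) Cone3) => x.
have Ginv : g x = \sum_(S : {set 'I_n} | (#|S| <= 8 * d)%N) gs S * chi R S x.
  rewrite {1}(inversion g x) [RHS]big_mkcond; apply: eq_bigr => S _.
  case: leqP => HS //; by rewrite /gs Hc1 // mul0r.
rewrite big_split /= -Ginv /g.
set A := \sum_(S : {set 'I_n} | _) `|gs S|; clearbody A.
move: (Af x) (f x) => a b.
by ring.
Qed.
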